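(* Let $\mathcal{A}=\{a_1,\ldots,a_m\}$ be a set of $m$ distinct positive integers, and let $\phi_{\mathcal{A},\mathbb{C}}:\mathbb{C}^n\to\mathbb{C}^m$, $x\mapsto(\sum_{i=1}^n x_i^{a_j})_{j=1,\ldots,m}$, with restrictions $\phi_{\mathcal{A},\mathbb{R}}:\mathbb{R}^n\to\mathbb{R}^m$ and $\phi_{\mathcal{A},\ge0}:\mathbb{R}^n_{\ge0}\to\mathbb{R}^m_{\ge0}$. Using the classical topology: (1) the constructible set $\mathrm{im}(\phi_{\mathcal{A},\mathbb{C}})$ is not closed in $\mathbb{C}^m$ in general (there exist $n,\mathcal{A}$ for which it is not closed); (2) if some $a_j$ is even, then the semialgebraic set $\mathrm{im}(\phi_{\mathcal{A},\mathbb{R}})$ is closed in $\mathbb{R}^m$; if all $a_j$ are odd, it is not closed in general (there exist such $n,\mathcal{A}$ for which it is not closed); (3) for every $n$ and $\mathcal{A}$, the semialgebraic set $\mathrm{im}(\phi_{\mathcal{A},\ge0})$ is closed in $\mathbb{R}^m_{\ge0}$. *)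

(* Defs.v *)
From HB Require Import structures.
From mathcomp Require Import all_boot all_order all_algebra.
From mathcomp Require Import complex.
From mathcomp Require Import all_classical all_reals all_analysis.
Set Implicit Arguments. Unset Strict Implicit. Unset Printing Implicit Defensive.
Import Order.TTheory GRing.Theory Num.Theory.
Import numFieldTopology.Exports numFieldNormedType.Exports.
Local Open Scope ring_scope.
Local Open Scope classical_set_scope.

Definition exponent_set (A : seq nat) : Prop := uniq A /\ all (fun a => 0 < a)%N A.

Definition phiA (K : nzRingType) (n : nat) (A : seq nat) (x : 'rV[K]_n)
  : 'rV[K]_(size A) :=
  \row_(j < size A) \sum_(i < n) (x 0 i) ^+ (nth 0%N A j).

Definition nonneg_orthant (R : realType) (n : nat) : set 'rV[R]_n :=
  [set x | forall i, 0 <= x 0 i].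

(* Closedness of S relative to the subspace D (S a subset of D):
   every point of D adherent to S lies in S. *)
Definition closed_in (T : topologicalType) (D S : set T) : Prop :=
  forall y, D y -> closure S y -> S y.

(* The complex numbers C = R[i] (with R a real closed field / the reals),
   viewed as a numFieldType so that it carries its norm (classical)
   topology |a + ib| = sqrt (a^2 + b^2); C^m gets the product topology. *)
Definition Cfield (R : realType) : numFieldType := R[i].
Arguments nonneg_orthant : clear implicits.

(* Main.v *)
Require Import Defs.
From HB Require Import structures.
From mathcomp Require Import all_boot all_order all_algebra.
From mathcomp Require Import complex.
From mathcomp Require Import all_classical all_reals all_analysis.
From mathcomp Require Import ring lra.
Import Order.TTheory GRing.Theory Num.Theory.
Import numFieldTopology.Exports numFieldNormedType.Exports.
Local Open Scope ring_scope.
Local Open Scope classical_set_scope.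

Lemma not_closed13 (K : numFieldType) : ~ closed (range (@phiA K 2 [:: 1%N; 3%N])).
Proof.
pose y0 : 'rV[K]_2 := \row_(j < 2) (if j == 0 :> nat then 0 else 3).
move=> cl.
have : range (@phiA K 2 [:: 1%N; 3%N]) y0.
  apply: cl => B /nbhs_ballP [e e0 eB].
  pose x := e / (e + 4).
  have e4 : 0 < e + 4 by rewrite addr_gt0.
  have x0 : 0 < x by rewrite divr_gt0.
  have x1 : x <= 1 by rewrite ler_pdivrMr // mul1r lerDl.
  have x4 : 4 * x < e.
    by rewrite /x mulrA ltr_pdivrMr // mulrDr [e * 4]mulrC ltrDr mulr_gt0.
  have xk : forall k, (0 < k)%N -> x ^+ k <= x.
    case=> // k _; rewrite exprS -[leRHS]mulr1 ler_wpM2l ?(ltW x0) //.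
    exact: exprn_ile1 (ltW x0) x1.
  have xn0 : x != 0 by rewrite gt_eqF.
  pose v : 'rV[K]_2 := \row_(i < 2) (if i == 0 :> nat then x^-1 else x^+2 - x^-1).
  exists (@phiA K 2 [:: 1%N; 3%N] v); split; first by exists v.
  apply: eB; split => // i j; rewrite (ord1 i) /ball /= !mxE.
  case: j => [[|[|//]]] Hj /=; rewrite !big_ord_recr big_ord0 /= !mxE /= !add0r.
  - rewrite normrN !expr1 (_ : x^-1 + (x^+2 - x^-1) = x ^+ 2); last by ring.
    rewrite ger0_norm ?exprn_ge0 ?ltW //.
    apply: le_lt_trans (xk 2%N isT) _; apply: le_lt_trans x4.
    rewrite ler_peMl ?(ltW x0) //; first [by rewrite ler1n | by rewrite (ler_nat _ 1 4) | by rewrite lerDl | idtac "FAIL"].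
  - rewrite [X in _ - X](_ : _ = x ^+ 6 - 3 * x ^+ 3 + 3); last by field.
    rewrite (_ : 3 - (x ^+ 6 - 3 * x ^+ 3 + 3) = 3 * x ^+ 3 - x ^+ 6); last by ring.
    apply: le_lt_trans x4; apply: le_trans (ler_normB _ _) _.
    rewrite normrM !ger0_norm ?exprn_ge0 ?(ltW x0) ?ler0n // (_ : 4 * x = 3 * x + x); last by ring.
    apply: lerD; last exact: xk.
    by rewrite ler_wpM2l ?ler0n // xk.
case=> x _ /rowP H.
have e0 := H ord0; have e1 := H (lift ord0 ord0).
rewrite !mxE /= !big_ord_recr big_ord0 /= add0r !expr1 in e0 e1.
have id3 : forall a b : K, a ^+ 3 + b ^+ 3 = (a + b) * (a ^+ 2 - a * b + b ^+ 2) by move=> a b; ring.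
move: e1; rewrite big_ord0 add0r id3 e0 mul0r => /eqP; by rewrite eq_sym pnatr_eq0.
Qed.
Lemma mx_continuous (T : topologicalType) (K : numFieldType) m n (f : T -> 'M[K]_(m,n)) :
  (forall i j, continuous (fun x => f x i j)) -> continuous f.
Proof.
move=> fc x B /= /nbhs_ballP [e e0 eB].
have H : \forall z \near x, forall i j, ball (f x i j) e (f z i j).
  apply: filter_forall => i; apply: filter_forall => j.
  exact: (fc i j x) (nbhsx_ballx _ _ e0).
apply: filterS H => z Hz; apply: eB; split => //.
Qed.

Lemma sum_continuous (T : topologicalType) (K : numFieldType) (I : Type) (r : seq I)
  (g : I -> T -> K) : (forall i, continuous (g i)) -> continuous (fun x => \sum_(i <- r) g i x).
Proof.
move=> gc; elim: r => [|a r IH].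
  rewrite (_ : (fun x => _) = fun=> 0); first exact: cst_continuous.
  by apply/funext => x; rewrite big_nil.
rewrite (_ : (fun x => _) = (g a + fun x => \sum_(i <- r) g i x)); last first.
  by apply/funext => x; rewrite big_cons.
move=> x; apply: continuousD; [exact: gc | exact: IH].
Qed.

Lemma phiA_continuous (R : realType) n (A : seq nat) : continuous (@phiA R n A).
Proof.
apply: mx_continuous => i j.
rewrite (_ : (fun x => _) = fun x : 'rV[R]_n => \sum_(k < n) x 0 k ^+ nth 0%N A j); last first.
  by apply/funext => x; rewrite mxE.
apply: sum_continuous => k x.
apply: (@continuous_comp _ _ _ (fun M : 'rV[R]_n => M 0 k) (fun r : R => r ^+ nth 0%N A j)).
  exact: coord_continuous.
exact: exprn_continuous.
Qed.

Lemma key_closed (R : realType) n (A : seq nat) (D : set 'rV[R]_n) (j : 'I_(size A)) :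
  closed D -> (0 < nth 0%N A j)%N ->
  (forall x, D x -> forall i, 0 <= x 0 i ^+ nth 0%N A j) ->
  closed (@phiA R n A @` D).
Proof.
move=> Dcl a0 Dpos y cly.
pose a := nth 0%N A j.
pose M : R := `|y 0 j| + 2.
pose box := [set v : 'rV[R]_n | forall i, (fun=> `[- M, M]%classic) i (v ord0 i)].
have boxc : compact box := rV_compact (fun=> @segment_compact R (- M) M).
have Kc : compact (box `&` D) := compact_closedI boxc Dcl.
have fKc : compact (@phiA R n A @` (box `&` D)).
  exact: continuous_compact (continuous_subspaceT (@phiA_continuous R n A)) Kc.
have fKcl := compact_closed (@norm_hausdorff _ _) fKc.
suff : (@phiA R n A @` (box `&` D)) y by case=> x [_ Dx] <-; exists x.
apply: fKcl => B nB.
have nB' : nbhs y (B `&` ball y 1) by apply: filterI nB (nbhsx_ballx _ _ ltr01).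
have [_ [[x Dx <-] [Bfx bfx]]] := cly _ nB'.
exists (@phiA R n A x); split => //; exists x => //; split => //.
move=> i /=.
have hb : `|y 0 j - @phiA R n A x 0 j| < 1 by have := bfx.2 0 j.
rewrite mxE in hb.
have hs : \sum_(k < n) x 0 k ^+ a < `|y 0 j| + 1.
  move: hb; rewrite ltr_distlC => /andP[_ h]; apply: lt_le_trans h _.
  by rewrite lerD2r ler_norm.
have hi : x 0 i ^+ a <= \sum_(k < n) x 0 k ^+ a.
  rewrite (bigD1 i) //= lerDl sumr_ge0 // => k _; exact: Dpos.
have hx : `|x 0 i| <= M.
  have := normr_ge0 (y 0 j).
  case: (leP `|x 0 i| 1) => h1 hy; first by rewrite /M; lra.
  have : `|x 0 i| <= `|x 0 i| ^+ a.
    rewrite /a; case: (nth 0%N A j) a0 => // k _.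
    rewrite exprS -[leLHS]mulr1 ler_wpM2l // exprn_ege1 // ltW //.
  rewrite -normrX (ger0_norm (Dpos x Dx i)).
  move=> h2; rewrite /M; lra.
by rewrite in_itv /= -ler_norml.
Qed.

Lemma orthant_closed (R : realType) n : closed (nonneg_orthant R n).
Proof.
rewrite (_ : nonneg_orthant R n = \bigcap_(i in setT) ((fun x : 'rV[R]_n => x 0 i) @^-1` [set r : R | 0 <= r])).
  apply: closed_bigI => i _; apply: preimage_closed; last exact: closed_ge.
  move=> x _; exact: coord_continuous.
by apply/seteqP; split => x /= H i; [move=> _; apply: H | by apply: H].
Qed.

Theorem proposition4p1 (R : realType) :
  (* (1) the complex image is not closed in general *)
  (exists (n : nat) (A : seq nat), exponent_set A /\
     ~ closed (range (@phiA (Cfield R) n A)))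
  /\
  (* (2a) if some exponent is even, the real image is closed *)
  (forall (n : nat) (A : seq nat), exponent_set A ->
     has (fun a => ~~ odd a) A -> closed (range (@phiA R n A)))
  /\
  (* (2b) with all exponents odd, the real image is not closed in general *)
  (exists (n : nat) (A : seq nat), exponent_set A /\ all odd A /\
     ~ closed (range (@phiA R n A)))
  /\
  (* (3) the image of the nonnegative orthant is closed in R^m_{>=0} *)
  (forall (n : nat) (A : seq nat), exponent_set A ->
     closed_in (nonneg_orthant R (size A))
               (@phiA R n A @` nonneg_orthant R n)).
Proof.
split; [|split; [|split]].
- by exists 2%N, [:: 1%N; 3%N]; split; [by [] | exact: not_closed13].
- move=> n A [uA pA] /hasP [a aA ev].
  have ia : (index a A < size A)%N by rewrite index_mem.
  have na : nth 0%N A (index a A) = a by rewrite nth_index.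
  apply: (@key_closed R n A setT (Ordinal ia) closedT) => /=; rewrite na.
    by move/allP: pA => /(_ a aA).
  by move=> x _ i; exact: exprn_even_ge0.
- by exists 2%N, [:: 1%N; 3%N]; split; [by [] | split; [by [] | exact: not_closed13]].
- move=> n [|a A'] [uA pA] y _ cly.
    exists 0; first by move=> i; rewrite mxE.
    by apply/rowP => -[].
  apply: (@key_closed R n (a :: A') _ ord0 (@orthant_closed R n)) => //=.
    by move: pA => /= /andP[].
  by move=> x Hx i; rewrite exprn_ge0.
Qed.
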